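(* Let $1\le k\le n$ and $S\in\{n\ k\}$. The restriction of $\mathsf{Rot}_S$ to the boundary $[0,\pi]^{Z_S}\setminus(0,\pi)^{Z_S}$ takes values in $\bigcup_{T<S}\mathsf{Gr}_k(n)_T$.
   Context: $\mathsf{Gr}_k(n)$ is the real Grassmannian of $k$-dimensional subspaces of $\mathbb{R}^n$, with the quotient topology from the map $\mathsf{col}$ sending an injective $n\times k$ matrix to its column space. $\{n\ k\}$ is the set of $k$-element subsets $S=\{s_1<\cdots<s_k\}$ of $\{1,\dots,n\}$, partially ordered by $S\le T$ iff $s_i\le t_i$ for all $i$. For $S$, let $\mathbb{R}^S=\mathrm{span}\{e_i: i\in S\}$, and $U_S$ the set of $V\in\mathsf{Gr}_k(n)$ whose orthogonal projection to $\mathbb{R}^S$ is an isomorphism. The Schubert cell is $\mathsf{Gr}_k(n)_S:=\{V\mid S \text{ is the maximum of }\{T: V\in U_T\}\}$. Let $Z_S:=\{(i,j)\mid 1\le i\le k,\ i\le j\le s_i-1\}$, totally ordered by $(i,j)\le(i',j')$ iff $i<i'$, or $i=i'$ and $j\ge j'$. $\mathsf{R}_j(\theta)\in O(n)$ is the rotation by $\theta$ in the oriented $(e_j,e_{j+1})$-plane. $\mathsf{Rot}_S:[0,\pi]^{Z_S}\to\mathsf{Gr}_k(n)$ is $(\theta_{(i,j)})\mapsto \mathsf{col}\bigl((\prod_{(i,j)\in Z_S}\mathsf{R}_j(\theta_{(i,j)}))\,\mathbb{1}_{n\times k}\bigr)$, product from left to right in increasing order of $Z_S$, $\mathbb{1}_{n\times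 k}$ the first $k$ columns of the identity. *)

(* Defs.v *)
From HB Require Import structures.
From mathcomp Require Import all_boot all_order all_algebra.
From mathcomp Require Import reals trigo.
Set Implicit Arguments. Unset Strict Implicit. Unset Printing Implicit Defensive.
Import Order.TTheory GRing.Theory Num.Theory.
Local Open Scope ring_scope.

(* Indices are 0-based: the paper's {1..n} is 'I_n, e_{i+1} is the i-th basis vector. *)

Section Grass.
Variable R : realType.
Variable n : nat.

Definition sorted_elts (S : {set 'I_n}) : seq nat :=
  sort leq [seq val i | i <- enum S].
Definition elt (S : {set 'I_n}) (i : nat) : nat := nth 0%N (sorted_elts S) i.

Definition subset_le (S T : {set 'I_n}) : Prop :=
  forall i, (i < #|S|)%N -> (elt S i <= elt T i)%N.
Definition subset_lt (S T : {set 'I_n}) : Prop := subset_le S T /\ S <> T.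

(* Subspaces of R^n are represented by row-space matrices (mxalgebra).
   The column space col(A) of A : 'M_(n,k) is the row space of A^T. *)

Definition projT (T : {set 'I_n}) : 'M[R]_n := diag_mx (\row_i (i \in T)%:R).

(* V \in U_T : the orthogonal projection V -> R^T is an isomorphism *)
Definition in_U (T : {set 'I_n}) m (V : 'M[R]_(m, n)) : Prop :=
  (forall v : 'rV[R]_n, (v <= V)%MS -> v *m projT T = 0 -> v = 0) /\
  (forall w : 'rV[R]_n, (w <= projT T)%MS ->
     exists2 v : 'rV[R]_n, (v <= V)%MS & v *m projT T = w).

Definition in_schubert_cell (k : nat) (S : {set 'I_n}) m (V : 'M[R]_(m, n)) : Prop :=
  [/\ #|S| = k, in_U S V &
      forall T : {set 'I_n}, #|T| = k -> in_U T V -> subset_le T S].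

(* Z_S (0-based: pairs (i,j) with i < k, i <= j < s_i), listed in the
   increasing order: (i,j) < (i',j') iff i < i', or i = i' and j > j'. *)
Definition Zseq (S : {set 'I_n}) : seq (nat * nat) :=
  flatten [seq [seq (i, j) | j <- rev (iota i (elt S i - i))] | i <- iota 0 #|S|].

Definition rotR (j : nat) (theta : R) : 'M[R]_n :=
  \matrix_(a, b)
    (if (val a == j) && (val b == j) then cos theta
     else if (val a == j.+1) && (val b == j.+1) then cos theta
     else if (val a == j.+1) && (val b == j) then sin theta
     else if (val a == j) && (val b == j.+1) then - sin theta
     else (val a == val b)%:R).

Definition idcols (k : nat) : 'M[R]_(n, k) := \matrix_(a, b) (val a == val b)%:R.

(* the matrix (prod_{z in Z_S} R_{z.2}(theta_z)) 1_{n x k}, product left to right *)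
Definition RotMat (S : {set 'I_n}) (theta : nat * nat -> R) : 'M[R]_(n, #|S|) :=
  foldr (fun z M => rotR z.2 (theta z) *m M) 1%:M (Zseq S) *m idcols #|S|.

(* Rot_S(theta) = col(RotMat S theta), as a row-space matrix *)
Definition RotS (S : {set 'I_n}) (theta : nat * nat -> R) : 'M[R]_(#|S|, n) :=
  (RotMat S theta)^T.

End Grass.

(* Main.v *)
Require Import Defs.
From HB Require Import structures.
From mathcomp Require Import all_boot all_order all_algebra.
From mathcomp Require Import reals trigo.
From mathcomp Require Import zify.
Set Implicit Arguments. Unset Strict Implicit. Unset Printing Implicit Defensive.
Import Order.TTheory GRing.Theory Num.Theory.

Lemma sorted_count (s : seq nat) i r : sorted ltn s -> (i < size s)%N ->
  (nth 0 s i < r)%N = (i < count (fun x => x < r)%N s)%N.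
Proof.
elim: s i => [|x s IH] i //= Hs Hi.
have Hs' := path_sorted Hs.
have Hall : all (fun y => x < y)%N s := order_path_min ltn_trans Hs.
have C0 : (r <= x)%N -> count (fun y => y < r)%N s = 0%N.
  move=> Hrx; apply/eqP; rewrite eqn0Ngt -has_count; apply/hasPn => y ys.
  have := allP Hall y ys => Hxy; rewrite -leqNgt; exact: leq_trans Hrx (ltnW Hxy).
case: i Hi => [|i] Hi /=.
  case: (ltnP x r) => Hxr /=; first by rewrite add1n.
  by rewrite add0n C0.
rewrite IH //; case: (ltnP x r) => Hxr /=; first by rewrite add1n ltnS.
by rewrite add0n C0.
Qed.

Section Elt.
Variable n : nat.
Implicit Types S A B : {set 'I_n}.

Definition cnt S r := count (fun x => x < r)%N (sorted_elts S).

Lemma sorted_elts_sorted S : sorted ltn (sorted_elts S).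
Proof.
rewrite ltn_sorted_uniq_leq sort_uniq sort_sorted ?andbT; last exact: leq_total.
rewrite map_inj_uniq ?enum_uniq //; exact: val_inj.
Qed.

Lemma size_sorted_elts S : size (sorted_elts S) = #|S|.
Proof. by rewrite /sorted_elts size_sort size_map cardE. Qed.

Lemma elt_lt_n S i : (i < #|S|)%N -> (elt S i < n)%N.
Proof.
move=> Hi; have : elt S i \in sorted_elts S by apply: mem_nth; rewrite size_sorted_elts.
rewrite /sorted_elts mem_sort. move=> /mapP [y _ ->]. exact: ltn_ord.
Qed.

Lemma elt_mono S i j : (i < j)%N -> (j < #|S|)%N -> (elt S i < elt S j)%N.
Proof.
move=> Hij Hj; apply: (sorted_ltn_nth ltn_trans) => //; first exact: sorted_elts_sorted.
  by rewrite inE size_sorted_elts (ltn_trans Hij).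
by rewrite inE size_sorted_elts.
Qed.

Lemma elt_ge S i : (i < #|S|)%N -> (i <= elt S i)%N.
Proof.
elim: i => [|i IH] Hi //.
have := elt_mono (ltnSn i) Hi; have := IH (ltnW Hi); exact: leq_ltn_trans.
Qed.

Lemma elt_count S i r : (i < #|S|)%N -> (elt S i < r)%N = (i < cnt S r)%N.
Proof. by move=> Hi; rewrite /elt sorted_count ?sorted_elts_sorted ?size_sorted_elts. Qed.

Lemma cnt_sum S r : cnt S r = (\sum_(c in S | (c < r)%N) 1)%N.
Proof.
rewrite /cnt /sorted_elts count_sort count_map -sum1_count big_enum_cond /=.
by apply: eq_bigl => c.
Qed.

Lemma gale_cnt A B : #|A| = #|B| -> (forall r, cnt B r <= cnt A r)%N -> subset_le A B.
Proof.
move=> HAB H i Hi; have HiB : (i < #|B|)%N by rewrite -HAB.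
have := elt_count (elt B i).+1 HiB; rewrite ltnSn => /esym h.
rewrite -ltnS elt_count //; exact: leq_trans h (H _).
Qed.

End Elt.

Local Open Scope ring_scope.

Section Lin.
Variable R : realType.
Variable n : nat.
Implicit Types A B T : {set 'I_n}.

Notation P := (@projT R n).
Definition E r : 'M[R]_n := P [set i : 'I_n | (i < r)%N].

Lemma mulX_projT m (X : 'M[R]_(m, n)) A :
  X *m P A = \matrix_(a, c) (if c \in A then X a c else 0).
Proof. by rewrite /projT mul_mx_diag; apply/matrixP => a c; rewrite !mxE; case: (c \in A); rewrite ?mulr1 ?mulr0. Qed.

Lemma projT_mul A B : P A *m P B = P (A :&: B).
Proof.
rewrite mulX_projT /projT; apply/matrixP => a c; rewrite !mxE.
case: (eqVneq a c) => [->|Hac]; last by case: (c \in B); rewrite ?mulr0n.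
by rewrite inE; case: (c \in B); rewrite ?andbT ?andbF ?mulr0n.
Qed.

Lemma projT_idem A : P A *m P A = P A.
Proof. by rewrite projT_mul setIid. Qed.

Lemma sub_projT_fix m (X : 'M[R]_(m, n)) A : (X <= P A)%MS -> X *m P A = X.
Proof. by move/submxP => [D ->]; rewrite -mulmxA projT_idem. Qed.

Lemma sub_projT m (X : 'M[R]_(m, n)) A :
  (X <= P A)%MS <-> (forall a c, c \notin A -> X a c = 0).
Proof.
split.
  move=> /sub_projT_fix H a c Hc; move/matrixP: H => /(_ a c).
  by rewrite mulX_projT mxE (negbTE Hc) => <-.
move=> H; have -> : X = X *m P A.
  apply/matrixP => a c; rewrite mulX_projT mxE; case: ifP => // /negbT Hc.
  by rewrite H.
exact: submxMl.
Qed.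

Lemma projT_sub A B : A \subset B -> (P A <= P B)%MS.
Proof. by move=> H; rewrite -(setIidPl H) -projT_mul; exact: submxMl. Qed.

Lemma row_projT A (c : 'I_n) : row c (P A) = (c \in A)%:R *: delta_mx 0 c.
Proof. by apply/rowP => b; rewrite !mxE eq_sym mulr_natr. Qed.

Lemma rank_projT A : (\rank (P A) <= #|A|)%N.
Proof.
pose Q : 'M[R]_(#|A|, n) := \matrix_(a, c) ((enum_val a == c)%:R).
apply: leq_trans (rank_leq_row Q); apply: mxrankS; apply/row_subP => c.
rewrite row_projT; case: (boolP (c \in A)) => Hc; last by rewrite scale0r sub0mx.
rewrite scale1r; have -> : delta_mx 0 c = row (enum_rank_in Hc c) Q.
  by apply/rowP => b; rewrite !mxE enum_rankK_in // eq_sym.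
exact: row_sub.
Qed.

Lemma inj_rank' m p (V : 'M[R]_(m, n)) (X : 'M[R]_(p, n)) T :
  (forall v : 'rV[R]_n, (v <= V)%MS -> v *m P T = 0 -> v = 0) ->
  (X <= V)%MS -> \rank (X *m P T) = \rank X.
Proof.
move=> HU HXV; have := mxrank_mul_ker X (P T).
suff -> : \rank (X :&: kermx (P T)) = 0%N by rewrite addn0.
apply/eqP; rewrite mxrank_eq0 -submx0; apply/row_subP => i; rewrite submx0; apply/eqP.
have Hv : (row i (X :&: kermx (P T)) <= X :&: kermx (P T))%MS := row_sub _ _.
apply: HU; first exact: submx_trans (submx_trans Hv (capmxSl _ _)) HXV.
apply/sub_kermxP; exact: submx_trans Hv (capmxSr _ _).
Qed.

Lemma inj_rank m p (V : 'M[R]_(m, n)) (X : 'M[R]_(p, n)) T :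
  in_U T V -> (X <= V)%MS -> \rank (X *m P T) = \rank X.
Proof. by case=> HU _; apply: inj_rank'. Qed.

Lemma G1 m p (V : 'M[R]_(m, n)) (X : 'M[R]_(p, n)) T r :
  in_U T V -> (X <= V)%MS -> (X <= E r)%MS -> (\rank X <= cnt T r)%N.
Proof.
move=> HU HXV HXE; rewrite -(inj_rank HU HXV) -(sub_projT_fix HXE) -mulmxA projT_mul.
apply: leq_trans (mxrankM_maxr _ _) _; apply: leq_trans (rank_projT _) _.
rewrite cnt_sum -sum1_card; apply: eq_leq; apply: eq_bigl => c; rewrite !inE andbC.
by [].
Qed.

Section Cell.
Variables (m : nat) (V : 'M[R]_(m, n)).

Definition d r := \rank (V :&: E r).

Lemma E_mono r : (E r <= E r.+1)%MS.
Proof. by apply: projT_sub; apply/subsetP => c; rewrite !inE => /ltnW. Qed.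

Lemma d_mono r : (d r <= d r.+1)%N.
Proof. by apply: mxrankS; apply: capmxS (submx_refl _) (E_mono r). Qed.

Lemma d_step r : (d r.+1 <= (d r).+1)%N.
Proof.
pose L : 'rV[R]_n := \row_c ((val c == r)%:R).
have HE : (E r.+1 <= E r + L)%MS.
  apply/row_subP => c; rewrite row_projT inE.
  case: (ltngtP c r) => Hc.
  - rewrite ltnS (ltnW Hc) scale1r; apply: submx_trans (addsmxSl _ _).
    have -> : delta_mx 0 c = row c (E r) by rewrite row_projT inE Hc scale1r.
    exact: row_sub.
  - by rewrite ltnNge Hc scale0r sub0mx.
  - rewrite Hc ltnSn scale1r; have -> : delta_mx 0 c = L.
      by apply/rowP => b; rewrite !mxE eqxx -Hc.
    exact: addsmxSr.
have H1 : (\rank (V :&: E r.+1 + E r) <= \rank (E r + L))%N.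
  apply: mxrankS; rewrite addsmx_sub addsmxSl andbT.
  exact: submx_trans (capmxSr _ _) HE.
have H2 := (mxrank_adds_leqif (E r) L).1.
have H3 := rank_leq_row L.
have H4 : (\rank (V :&: E r.+1 :&: E r) <= d r)%N.
  apply: mxrankS; rewrite sub_capmx capmxSr andbT.
  exact: submx_trans (capmxSl _ _) (capmxSl _ _).
have H5 := mxrank_sum_cap (V :&: E r.+1)%MS (E r).
rewrite /d; move: H1 H2 H3 H4 H5; rewrite /d; lia.
Qed.

Lemma d0 : d 0 = 0%N.
Proof.
rewrite /d; have -> : E 0 = 0 by apply/matrixP => a c; rewrite /E /projT !mxE inE ltn0 mul0rn.
by rewrite capmx0 mxrank0.
Qed.

Lemma dn r : (n <= r)%N -> d r = \rank V.
Proof.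
move=> Hr; apply: eqmx_rank; apply/eqmxP; apply/capmx_idPl.
apply/sub_projT => a c; rewrite inE => /negP; case.
exact: leq_trans (ltn_ord c) Hr.
Qed.

Definition Tset := [set i : 'I_n | (d i < d i.+1)%N].

Lemma cnt_T r : (r <= n)%N -> cnt Tset r = d r.
Proof.
move=> Hr; rewrite cnt_sum big_mkcondl /=.
rewrite (eq_bigr (fun c : 'I_n => ((d c < d c.+1)%N : nat))); last first.
  by move=> c _; rewrite inE; case: ifP.
rewrite -(@big_ord_widen_cond _ 0%N addn r n xpredT (fun c => ((d c < d c.+1)%N : nat)) Hr).
elim: r Hr => [|r IH] Hr; first by rewrite big_ord0 d0.
rewrite big_ord_recr /= IH ?(ltnW Hr) //.
have := d_mono r; have := d_step r; case: ltnP => H /=; lia.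
Qed.

Lemma card_T : #|Tset| = \rank V.
Proof.
rewrite -(dn (leqnn n)) -cnt_T // cnt_sum -sum1_card.
by apply: eq_bigl => c; rewrite ltn_ord andbT.
Qed.


Lemma T_inj r : (r <= n)%N -> forall v : 'rV[R]_n,
  (v <= V)%MS -> (v <= E r)%MS -> v *m P Tset = 0 -> v = 0.
Proof.
elim: r => [|r IH] Hr v HvV HvE Hv0.
  apply/rowP => c; rewrite mxE; apply: (proj1 (sub_projT _ _) HvE); by rewrite inE ltn0.
pose c0 : 'I_n := Ordinal Hr.
case: (eqVneq (v 0 c0) 0) => Hc0.
  apply: (IH (ltnW Hr) v HvV _ Hv0); apply/sub_projT => a c; rewrite inE -leqNgt => Hc.
  have ->: a = 0 by apply: ord1.
  case: (eqVneq c c0) => [->//|Hne].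
  apply: (proj1 (sub_projT _ _) HvE); rewrite inE -leqNgt.
  by rewrite ltn_neqAle Hc andbT; move: Hne; apply: contra => /eqP H; apply/eqP/val_inj.
have Hin : c0 \in Tset.
  rewrite inE; have HS : (V :&: E r <= V :&: E r.+1)%MS by apply: capmxS (submx_refl _) (E_mono r).
  have [Hle Heq] := mxrank_leqif_sup HS.
  rewrite /d ltn_neqAle Hle andbT Heq; apply/negP => H.
  have : (v <= V :&: E r)%MS by apply: submx_trans H; rewrite sub_capmx HvV.
  move=> /(submx_trans)/(_ (capmxSr _ _))/sub_projT/(_ 0 c0); rewrite inE ltnn => /(_ isT).
  by move/eqP: Hc0.
move/rowP: Hv0 => /(_ c0); rewrite mulX_projT !mxE Hin => H; by move/eqP: Hc0; rewrite H.
Qed.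

Lemma T_inU : in_U Tset V.
Proof.
have Hinj : forall v : 'rV[R]_n, (v <= V)%MS -> v *m P Tset = 0 -> v = 0.
  move=> v HvV; apply: (T_inj (leqnn n)) => //.
  by apply/sub_projT => a c; rewrite inE ltn_ord.
split => // w Hw.
have Hr := inj_rank' Hinj (submx_refl V).

have HS : (V *m P Tset <= P Tset)%MS := submxMl _ _.
have [_ Heq] := mxrank_leqif_sup HS.
have : (P Tset <= V *m P Tset)%MS.
  rewrite -Heq eqn_leq mxrankS //= Hr -card_T; exact: rank_projT.
move=> /(submx_trans Hw)/submxP [D ->]; exists (D *m V); first exact: submxMl.
by rewrite mulmxA.
Qed.

Lemma T_max T' : in_U T' V -> forall r, (cnt Tset r <= cnt T' r)%N.
Proof.
move=> HU r; case: (leqP r n) => Hr.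
  rewrite cnt_T //; apply: G1 HU (capmxSl _ _) (capmxSr _ _).
apply: leq_trans (_ : \rank V <= _)%N.
  by rewrite -card_T -size_sorted_elts; exact: count_size.
apply: G1 HU (submx_refl _) _; apply/sub_projT => a c; rewrite inE => /negP []. 
exact: ltn_trans (ltn_ord c) Hr.
Qed.

End Cell.

Lemma cell_exists m (V : 'M[R]_(m, n)) k : \rank V = k ->
  exists T : {set 'I_n}, [/\ #|T| = k, in_U T V &
      forall T' : {set 'I_n}, #|T'| = k -> in_U T' V -> subset_le T' T].
Proof.
move=> Hk; exists (Tset V); split; first by rewrite card_T.
  exact: T_inU.
move=> T' HT' HU; apply: gale_cnt; first by rewrite HT' card_T.
exact: T_max.
Qed.

End Lin.

Section Rot.
Variable R : realType.
Variable n : nat.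
Notation rot := (@rotR R n).

Lemma rot_entry (j : nat) (Hj : (j.+1 < n)%N) t p (X : 'M[R]_(n, p)) a i :
  (rot j t *m X) a i =
  if nat_of_ord a == j then cos t * X (Ordinal (ltnW Hj)) i - sin t * X (Ordinal Hj) i
  else if nat_of_ord a == j.+1 then sin t * X (Ordinal (ltnW Hj)) i + cos t * X (Ordinal Hj) i else X a i.
Proof.
set j0 : 'I_n := Ordinal (ltnW Hj); set j1 : 'I_n := Ordinal Hj; rewrite mxE (bigD1 j0) // (bigD1 j1) /=; last first.
  by rewrite -val_eqE /= eq_sym neq_ltn ltnSn.
have Hrest : \sum_(c | (c != j0) && (c != j1)) rot j t a c * X c i =
    if (val a != j) && (val a != j.+1) then X a i else 0.
  rewrite (eq_bigr (fun c => (a == c)%:R * X c i)); last first.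
    move=> c /andP [H0 H1]; rewrite mxE.
    have -> : (val c == j) = false by apply/negbTE; move: H0; apply: contra => /eqP H; apply/eqP/val_inj.
    have -> : (val c == j.+1) = false by apply/negbTE; move: H1; apply: contra => /eqP H; apply/eqP/val_inj.
    by rewrite !andbF.
  case: ifP => Ha.
    rewrite (bigD1 a) /=; last first.
      case/andP: Ha => H0 H1; apply/andP; split.
        by move: H0; apply: contra => /eqP ->.
      by move: H1; apply: contra => /eqP ->.
    rewrite eqxx mul1r big1 ?addr0 // => c /andP [_ Hc].
    by rewrite eq_sym (negbTE Hc) mul0r.
  rewrite big1 // => c /andP [H0 H1].
  case: (eqVneq a c) => [Hac|]; last by rewrite mul0r.
  move: Ha; rewrite Hac.
  have -> : (val c == j) = false by apply/negbTE; move: H0; apply: contra => /eqP H; apply/eqP/val_inj.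
  by have -> : (val c == j.+1) = false by apply/negbTE; move: H1; apply: contra => /eqP H; apply/eqP/val_inj.
rewrite Hrest !mxE /= eqxx.
have Hjj : (j == j.+1) = false by elim: j {Hj j0 j1 Hrest}.
have Hjj' : (j.+1 == j) = false by rewrite eq_sym.
case: (eqVneq (val a) j) => Ha /=.
  by rewrite Ha eqxx Hjj Hjj' /= addr0 mulNr.
case: (eqVneq (val a) j.+1) => Ha' /=.
  by rewrite eqxx ?Hjj ?Hjj' /= addr0.
by rewrite !mul0r !add0r.
Qed.


Definition Supp p (X : 'M[R]_(n, p)) i b := forall a : 'I_n, (b < a)%N -> X a i = 0.

Lemma rot_supp j (Hj : (j.+1 < n)%N) t p (X : 'M[R]_(n, p)) i b :
  Supp X i b -> [|| (j.+1 <= b)%N, (b < j)%N | (j == b) && (sin t == 0)] ->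
  Supp (rot j t *m X) i b.
Proof.
move=> HX Hc a Hab; rewrite rot_entry.
case: (eqVneq (nat_of_ord a) j) => Ha.
  have Hbj : (b < j)%N by rewrite -Ha.
  by rewrite !HX ?mulr0 ?subr0 //= ltnW.
case: (eqVneq (nat_of_ord a) j.+1) => Ha'; last exact: HX.
have Hbj : (b < j.+1)%N by rewrite -Ha'.
rewrite (HX (Ordinal Hj)) // mulr0 addr0.
move: Hc; rewrite leqNgt Hbj /=; case/orP => [H|/andP [_ /eqP ->]]; last by rewrite mul0r.
by rewrite HX ?mulr0.
Qed.

Lemma rot_fix j (Hj : (j.+1 < n)%N) t p (X : 'M[R]_(n, p)) i :
  X (Ordinal (ltnW Hj)) i = 0 -> X (Ordinal Hj) i = 0 ->
  forall a, (rot j t *m X) a i = X a i.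
Proof.
move=> H0 H1 a; rewrite rot_entry H0 H1 !mulr0 subr0 addr0.
case: (eqVneq (nat_of_ord a) j) => Ha.
  by rewrite (_ : a = Ordinal (ltnW Hj)) //; apply: val_inj.
case: (eqVneq (nat_of_ord a) j.+1) => Ha' //.
by rewrite (_ : a = Ordinal Hj) //; apply: val_inj.
Qed.

Lemma rot_inv j (Hj : (j.+1 < n)%N) t : rot j t *m rot j (- t) = 1%:M.
Proof.
apply/matrixP => a b; rewrite rot_entry !mxE /= cosN sinN.
have Hjj : (j == j.+1) = false by elim: j {Hj}.
have Hjj' : (j.+1 == j) = false by rewrite eq_sym.
have Eab : (a == b) = (nat_of_ord a == nat_of_ord b) by [].
rewrite Eab.
case: (eqVneq (nat_of_ord a) j) => Ha; case: (eqVneq (nat_of_ord a) j.+1) => Ha';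
case: (eqVneq (nat_of_ord b) j) => Hb; case: (eqVneq (nat_of_ord b) j.+1) => Hb';
rewrite ?Ha ?Ha' ?Hb ?Hb' ?eqxx ?Hjj ?Hjj' /=; try (exfalso; lia).
all: try by [].
by rewrite mulrN opprK -!expr2 cos2Dsin2.
by rewrite opprK mulrC subrr.
by rewrite eq_sym (negbTE Hb) !mulr0 subr0.
by rewrite mulrN mulrC subrr.
by rewrite opprK -!expr2 addrC cos2Dsin2.
by rewrite eq_sym (negbTE Hb') !mulr0 addr0.
Qed.


Lemma rot_unit j (Hj : (j.+1 < n)%N) t : rot j t \in unitmx.
Proof. by case: (mulmx1_unit (rot_inv Hj t)). Qed.

End Rot.

Definition idc (R : realType) p q : 'M[R]_(p, q) := \matrix_(a, b) (nat_of_ord a == nat_of_ord b)%:R.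

Lemma idc_orth (R : realType) p q : (q <= p)%N -> (idc R p q)^T *m idc R p q = 1%:M.
Proof.
move=> Hqp; apply/matrixP => a a'; rewrite !mxE (bigD1 (widen_ord Hqp a)) //= big1.
  by rewrite !mxE /= eqxx mul1r addr0.
move=> b Hb; rewrite !mxE.
case: (eqVneq (nat_of_ord b) (nat_of_ord a)) => H; last by rewrite mul0r.
by exfalso; move: Hb; apply/negP; rewrite negbK; apply/eqP/val_inj.
Qed.

Lemma idc_rank (R : realType) p q : (q <= p)%N -> \rank (idc R p q)^T = q.
Proof.
move=> Hqp; apply/eqP; rewrite eqn_leq rank_leq_row /=.
by rewrite -{1}(mxrank1 R q) -(idc_orth R Hqp) mxrankM_maxl.
Qed.

Section Main.
Variable R : realType.
Variable n : nat.
Variable S : {set 'I_n}.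
Variable theta : nat * nat -> R.

Notation k := #|S|.
Notation s := (elt S).
Definition blk i : seq (nat * nat) := [seq (i, j) | j <- rev (iota i (elt S i - i))].

Lemma mem_flat_blk l z : z \in flatten [seq blk i | i <- l] ->
  exists2 i, i \in l & (z.1 = i /\ (i <= z.2 < i + (elt S i - i))%N).
Proof.
move/flattenP => [x /mapP [i Hi ->]] /mapP [j]; rewrite mem_rev mem_iota => Hj ->.
by exists i.
Qed.

Lemma Zseq_blk : Zseq S = flatten [seq blk i | i <- iota 0 k].
Proof. by []. Qed.

Definition Gf (L : seq (nat * nat)) p (X : 'M[R]_(n, p)) :=
  foldr (fun z Y => @rotR R n z.2 (theta z) *m Y) X L.

Lemma F_G L p (X : 'M[R]_(n, p)) :
  foldr (fun z M => @rotR R n z.2 (theta z) *m M) 1%:M L *m X = Gf L X.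
Proof. by elim: L => [|z L IH] /=; rewrite ?mul1mx // -mulmxA IH. Qed.

Lemma F_unit L : (forall z, z \in L -> (z.2.+1 < n)%N) ->
  foldr (fun z M => @rotR R n z.2 (theta z) *m M) 1%:M L \in unitmx.
Proof.
elim: L => [|z L IH] H /=; first exact: unitmx1.
rewrite unitmx_mul IH ?andbT; last by move=> z' Hz'; apply: H; rewrite in_cons Hz' orbT.
exact: (rot_unit (H z (mem_head _ _))).
Qed.

Lemma G_supp L p (X : 'M[R]_(n, p)) i b : Supp X i b ->
  (forall z, z \in L -> (z.2.+1 < n)%N /\
     [|| (z.2.+1 <= b)%N, (b < z.2)%N | (z.2 == b) && (sin (theta z) == 0)]) ->
  Supp (Gf L X) i b.
Proof.
move=> HX; elim: L => [|z L IH] H //=.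
have [Hn Hc] := H z (mem_head _ _).
have HL : Supp (Gf L X) i b by apply: IH => z' Hz'; apply: H; rewrite in_cons Hz' orbT.
exact: (rot_supp Hn HL Hc).
Qed.

Lemma G_fixcol L p (X : 'M[R]_(n, p)) (i : 'I_p) :
  (forall a : 'I_n, X a i = (nat_of_ord a == nat_of_ord i)%:R) ->
  (forall z, z \in L -> (z.2.+1 < n)%N /\ (i < z.2)%N) ->
  forall a : 'I_n, Gf L X a i = (nat_of_ord a == nat_of_ord i)%:R.
Proof.
move=> HX; elim: L => [|z L IH] H //=.
have [Hn Hc] := H z (mem_head _ _).
have IH' : forall a : 'I_n, Gf L X a i = (nat_of_ord a == nat_of_ord i)%:R.
  by apply: IH => z' Hz'; apply: H; rewrite in_cons Hz' orbT.
move=> a; rewrite rot_fix ?IH' //= .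
  by rewrite (_ : (z.2 == i) = false) //; apply/negbTE/eqP => E; move: Hc; rewrite E ltnn.
rewrite (_ : (z.2.+1 == i) = false) //; apply/negbTE/eqP => E; move: Hc; rewrite -E.
by rewrite ltnNge leqnSn.
Qed.


Lemma Gf_cat A B p (X : 'M[R]_(n, p)) : Gf (A ++ B) X = Gf A (Gf B X).
Proof. exact: foldr_cat. Qed.

Lemma s_mono i i' : (i' <= i)%N -> (i < k)%N -> (s i' <= s i)%N.
Proof.
rewrite leq_eqVlt => /orP [/eqP -> //|H] Hi; exact: ltnW (elt_mono H Hi).
Qed.

Lemma blk_mem l z : z \in flatten [seq blk i | i <- l] -> (forall i, i \in l -> (i < k)%N) ->
  exists2 i', i' \in l & [/\ z.1 = i', (i' <= z.2)%N, (z.2 < s i')%N & (s i' < n)%N].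
Proof.
move=> /mem_flat_blk [i' Hi' [H1 /andP [H2 H3]]] Hl; exists i' => //.
have Hk := Hl i' Hi'; move: H3; rewrite subnKC ?elt_ge // => H3.
by split => //; exact: elt_lt_n.
Qed.

Lemma Zseq_n z : z \in Zseq S -> (z.2.+1 < n)%N.
Proof.
rewrite Zseq_blk => /blk_mem [|i' _ [_ _ H1 H2]]; last exact: leq_ltn_trans H1 H2.
by move=> i; rewrite mem_iota.
Qed.

Lemma idcolsE (a : 'I_n) (i : 'I_k) : idcols R n k a i = (nat_of_ord a == nat_of_ord i)%:R.
Proof. by rewrite mxE. Qed.

Lemma C1 (i : 'I_k) : Supp (RotMat S theta) i (s i).
Proof.
rewrite /RotMat F_G Zseq_blk.
have -> : iota 0 k = iota 0 i.+1 ++ iota (0 + i.+1) (k - i.+1) by rewrite -iotaD subnKC.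
rewrite map_cat flatten_cat Gf_cat; apply: G_supp.
  move=> a Ha; rewrite (G_fixcol (i := i)) //.
    rewrite (_ : (nat_of_ord a == nat_of_ord i) = false) //; apply/negbTE.
    rewrite neq_ltn; apply/orP; right; apply: leq_ltn_trans Ha; exact: elt_ge.
  by move=> a'; rewrite idcolsE.
  move=> z /blk_mem [i' /=|i' Hi' [H1 H2 H3 H4]].
    by rewrite mem_iota => /andP [_]; rewrite add0n subnKC.
  split; first exact: leq_ltn_trans H3 H4.
  by move: Hi'; rewrite mem_iota => /andP [Hii' _]; apply: leq_trans H2.
move=> z /blk_mem [i'|i' Hi' [H1 H2 H3 H4]].
  by rewrite mem_iota => /andP [_]; rewrite add0n => H; exact: leq_trans H (ltn_ord i).
split; first exact: leq_ltn_trans H3 H4.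
move: Hi'; rewrite mem_iota add0n => /andP [_ Hi'].
by rewrite (leq_trans H3) // s_mono.
Qed.


Lemma Supp_weak p (X : 'M[R]_(n, p)) i b b' : (b <= b')%N -> Supp X i b -> Supp X i b'.
Proof. by move=> Hb H a Ha; apply: H; exact: leq_ltn_trans Hb Ha. Qed.

Lemma C2 z0 : z0 \in Zseq S -> sin (theta z0) = 0 ->
  exists i0 : 'I_k, (0 < s i0)%N /\ Supp (RotMat S theta) i0 (s i0).-1.
Proof.
move=> Hz Hsin; have Hz' := Hz; rewrite Zseq_blk in Hz'.
case/blk_mem: Hz' => [i|i0 Hi0 [H1 H2 H3 H4]]; first by rewrite mem_iota.
have Hlt : (i0 < k)%N by move: Hi0; rewrite mem_iota.
exists (Ordinal Hlt) => /=; split; first exact: leq_ltn_trans (leq0n _) H3.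
rewrite /RotMat F_G Zseq_blk.
have -> : iota 0 k = iota 0 i0 ++ i0 :: iota i0.+1 (k - i0.+1).
  have Hk : k = (i0 + (k - i0))%N by rewrite subnKC // ltnW.
  by rewrite {1}Hk iotaD add0n -(subnSK Hlt).
rewrite map_cat flatten_cat Gf_cat /= Gf_cat; apply: G_supp.
  apply: (Supp_weak (b := z0.2)); first by move: H3; lia.
  apply: G_supp.
    move=> a Ha; rewrite (G_fixcol (i := Ordinal Hlt)) //=.
      rewrite (_ : (nat_of_ord a == i0) = false) //; apply/negbTE.
      rewrite neq_ltn; apply/orP; right; exact: leq_ltn_trans H2 Ha.
    by move=> a'; rewrite idcolsE.
    move=> z /blk_mem [i'|i' Hi' [_ H2' H3' H4']].
      by rewrite mem_iota => /andP [_]; rewrite subnKC.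
    split; first exact: leq_ltn_trans H3' H4'.
    by move: Hi'; rewrite mem_iota => /andP [Hii' _]; apply: leq_trans H2'.
  move=> z /mapP [j]; rewrite mem_rev mem_iota subnKC ?elt_ge // => /andP [Hj1 Hj2] -> /=.
  split; first exact: leq_ltn_trans Hj2 (elt_lt_n Hlt).
  case: (ltngtP j z0.2) => Hj //=.
  rewrite (_ : (i0, j) = z0); first by rewrite Hsin eqxx.
  by case: z0 {Hz Hsin H2 H3 H4} H1 Hj => a b /= -> ->.
move=> z /blk_mem [i'|i' Hi' [_ H2' H3' H4']].
  by rewrite mem_iota => /andP [_]; rewrite add0n => H; exact: ltn_trans H Hlt.
split; first exact: leq_ltn_trans H3' H4'.
move: Hi'; rewrite mem_iota add0n => /andP [_ Hi'].
by rewrite ltn_predRL (leq_ltn_trans H3' (elt_mono Hi' Hlt)).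
Qed.


Lemma card_le : (k <= n)%N.
Proof. by rewrite -[X in (_ <= X)%N](card_ord n) max_card. Qed.

Lemma rankV : \rank (RotS S theta) = k.
Proof.
rewrite /RotS /RotMat trmx_mul mxrankMfree; first exact: (idc_rank R card_le).
rewrite row_free_unit unitmx_tr; apply: F_unit => z; exact: Zseq_n.
Qed.

Lemma rows_rank i : (i < k)%N -> \rank ((idc R k i.+1)^T *m RotS S theta) = i.+1.
Proof. by move=> Hi; rewrite mxrankMfree ?idc_rank // /row_free rankV. Qed.

Lemma rows_sub i r : (i < k)%N ->
  (forall (b : 'I_k) (c : 'I_n), (b <= i)%N -> (r <= c)%N -> RotMat S theta c b = 0) ->
  ((idc R k i.+1)^T *m RotS S theta <= E R n r)%MS.
Proof.
move=> Hi H; apply/sub_projT => a c; rewrite inE -leqNgt => Hc.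
rewrite mxE big1 // => b _.
rewrite (_ : RotS S theta b c = RotMat S theta c b); last by rewrite /RotS mxE.
rewrite (_ : (idc R k i.+1)^T a b = (nat_of_ord b == nat_of_ord a)%:R); last by rewrite !mxE.
case: (eqVneq (nat_of_ord b) (nat_of_ord a)) => Hb; last by rewrite mul0r.
by rewrite H ?mulr0 // Hb -ltnS.
Qed.

End Main.

Theorem lemma2p11 (R : realType) (n k : nat) (S : {set 'I_n}) :
  (1 <= k)%N -> (k <= n)%N -> #|S| = k ->
  forall theta : nat * nat -> R,
    (forall z, z \in Zseq S -> 0 <= theta z <= pi) ->
    (exists2 z, z \in Zseq S & theta z = 0 \/ theta z = pi) ->
    exists T : {set 'I_n},
      subset_lt T S /\ in_schubert_cell k T (RotS S theta).
Proof.
move=> _ _ HSk theta _ [z0 Hz0 Hb].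
have Hsin : sin (theta z0) = 0 by case: Hb => ->; rewrite ?sin0 ?sinpi.
subst k.
have [T [HT HU Hmax]] := cell_exists (rankV S theta).
have Hle : forall T' : {set 'I_n}, #|T'| = #|S| -> in_U T' (RotS S theta) -> subset_le T' S.
  move=> T' HT' HU' i Hi; have Hik : (i < #|S|)%N by rewrite -HT'.
  have Hz : forall (b : 'I_#|S|) (c : 'I_n), (b <= i)%N -> ((elt S i).+1 <= c)%N ->
      RotMat S theta c b = 0.
    move=> b c Hbi Hc; apply: (@C1 R n S theta b); apply: leq_ltn_trans Hc.
    exact: s_mono Hbi Hik.
  have := G1 HU' (submxMl _ _) (rows_sub (r := (elt S i).+1) (theta := theta) Hik Hz).
  by rewrite rows_rank // -elt_count.
have HnS : ~ in_U S (RotS S theta).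
  move=> HUS; have [i0 [Hpos Hsupp]] := C2 Hz0 Hsin.
  have Hz : forall (b : 'I_#|S|) (c : 'I_n), (b <= i0)%N -> (elt S i0 <= c)%N ->
      RotMat S theta c b = 0.
    move=> b c Hbi Hc; case: (eqVneq b i0) => [->|Hne].
      by apply: Hsupp; rewrite prednK.
    have Hlt : (b < i0)%N by rewrite ltn_neqAle Hbi andbT; move: Hne; apply: contra => /eqP H; apply/eqP/val_inj.
    apply: (@C1 R n S theta b); exact: leq_trans (elt_mono Hlt (ltn_ord i0)) Hc.
  have := G1 HUS (submxMl _ _) (rows_sub (r := elt S i0) (theta := theta) (ltn_ord i0) Hz).
  by rewrite rows_rank // -elt_count // ltnn.
exists T; split; first by split; [exact: Hle | move=> E; subst T; exact: HnS HU].
by split.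
Qed.
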